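(* Let $k>0$, let $Q\subset\mathbb{R}^2$ be a bounded open set with smooth boundary and connected exterior, let $\theta_1,\dots,\theta_N\in\mathbb{S}^1$, and let $u^\infty_{\theta_1},\dots,u^\infty_{\theta_N}\in L^2(\mathbb{S}^1)$ be given data. Let $R:L^2(\mathbb{S}^1)\to L^2(\mathbb{S}^1)$ be a bounded, self-adjoint, positive definite, invertible linear operator. Let $q_0\in L^2(Q)$ be an initial guess and $\{\alpha_i\}_{i\in\mathbb{N}_0}$ a sequence of positive regularization parameters. Define the Full data Levenberg–Marquardt (FLM) iterates by $q^{FLM}_0:=q_0$ and, for $i\in\mathbb{N}_0$, $$q^{FLM}_{i+1}=q^{FLM}_i+\Big(\alpha_i I+\vec{\mathcal{F}}'[q^{FLM}_i]^H R^{-1}\vec{\mathcal{F}}'[q^{FLM}_i]\Big)^{-1}\vec{\mathcal{F}}'[q^{FLM}_i]^H R^{-1}\Big(\vec u^\infty-\vec{\mathcal{F}}q^{FLM}_i\Big),$$ where $\vec u^\infty:=(u^\infty_{\theta_1},\dots,u^\infty_{\theta_N})$, $\vec{\mathcal{F}}q:=(\mathcal{F}_{\theta_1}q,\dots,\mathcal{F}_{\theta_N}q)$, $\vec{\mathcal{F}}'[q]m:=(\mathcal{F}'_{\theta_1}[q]m,\dots,\mathcal{F}'_{\theta_N}[q]m)$, and $R^{-1}$ acts componentwise on $L^2(\mathbb{S}^1)^N$. Define the Kalman filter Levenberg–Marquardt (KFL) iterates as follows: $q^{KFL}_{0,0}:=q_0$; for $i\ge 1$, $q^{KFL}_{i,0}:=q^{KFL}_{i-1,N}$;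 for every $i\in\mathbb{N}_0$, $B_{i,0}:=\frac{1}{\alpha_i}I$, and for $n=1,\dots,N$, $$K_{i,n}:=B_{i,n-1}\mathcal{F}'_{\theta_n}[q^{KFL}_{i,0}]^H\Big(R+\mathcal{F}'_{\theta_n}[q^{KFL}_{i,0}]B_{i,n-1}\mathcal{F}'_{\theta_n}[q^{KFL}_{i,0}]^H\Big)^{-1},$$ $$q^{KFL}_{i,n}:=q^{KFL}_{i,n-1}+K_{i,n}\Big(u^\infty_{\theta_n}-\mathcal{F}_{\theta_n}q^{KFL}_{i,0}+\mathcal{F}'_{\theta_n}[q^{KFL}_{i,0}]q^{KFL}_{i,0}-\mathcal{F}'_{\theta_n}[q^{KFL}_{i,0}]q^{KFL}_{i,n-1}\Big),$$ $$B_{i,n}:=\Big(I-K_{i,n}\mathcal{F}'_{\theta_n}[q^{KFL}_{i,0}]\Big)B_{i,n-1}.$$ Then, for all $i\in\mathbb{N}_0$ (with both iterations well defined, i.e. the relevant iterates lie in the domain where the Fréchet derivatives exist), $q^{KFL}_{i,N}=q^{FLM}_{i+1}$.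
   Context: For an incident direction $\theta\in\mathbb{S}^1$, the plane wave is $u^{inc}(x,\theta)=e^{ikx\cdot\theta}$. For $q\in L^\infty(Q)$ (extended by zero outside $Q$), $u_q(\cdot,\theta)$ denotes the solution of the Lippmann–Schwinger equation $u(x,\theta)=u^{inc}(x,\theta)+k^2\int_Q q(y)u(y,\theta)\Phi(x,y)\,dy$, where $\Phi(x,y)=\frac{i}{4}H^{(1)}_0(k|x-y|)$ is the fundamental solution of the Helmholtz equation in $\mathbb{R}^2$. The far-field mapping is $\mathcal{F}_\theta q(\hat x):=\frac{k^2e^{i\pi/4}}{\sqrt{8\pi k}}\int_Q e^{-ik\hat x\cdot y}u_q(y,\theta)q(y)\,dy$, $\hat x\in\mathbb{S}^1$. On $L^\infty_+(Q):=\{q\in L^\infty(Q):\exists q_0>0,\ \mathrm{Im}\,q\ge q_0\text{ a.e. on }Q\}\subset L^2(Q)$, $\mathcal{F}_\theta$ is Fréchet differentiable as a map into $L^2(\mathbb{S}^1)$, with derivative $\mathcal{F}'_\theta[q]:L^2(Q)\to L^2(\mathbb{S}^1)$ given by $\mathcal{F}'_\theta[q]m=v^\infty_{q,m}$, the far-field pattern of the radiating solution $v$ of $\Delta v+k^2(1+q)v=-k^2 m\,u_q(\cdot,\theta)$ in $\mathbb{R}^2$. The superscript $H$ denotes the Hilbert-space adjoint with respect to the standard $L^2$ inner products of $L^2(Q)$, $L^2(\mathbb{S}^1)$ and $L^2(\mathbb{S}^1)^N$. *)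

(* Defs.v *)
From HB Require Import structures.
From Stdlib Require Import ClassicalEpsilon.
From mathcomp Require Import all_boot all_order all_algebra.
Set Implicit Arguments. Unset Strict Implicit. Unset Printing Implicit Defensive.
Import Order.TTheory GRing.Theory Num.Theory.
Local Open Scope ring_scope.

Section Defs.
Variable K : numClosedFieldType.

Definition lin (U V : lmodType K) (f : U -> V) : Prop :=
  forall (a : K) (x y : U), f (a *: x + y) = a *: f x + f y.

Definition inner_product (V : lmodType K) (ip : V -> V -> K) : Prop :=
  [/\ forall (a : K) (u v w : V), ip (a *: u + v) w = a * ip u w + ip v w,
      forall u v : V, ip u v = Num.conj (ip v u),
      forall u : V, 0 <= ip u u &
      forall u : V, ip u u = 0 -> u = 0].

Definition is_adjoint (U V : lmodType K) (ipU : U -> U -> K) (ipV : V -> V -> K)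
  (A : U -> V) (AH : V -> U) : Prop :=
  forall (x : U) (y : V), ipV (A x) y = ipU x (AH y).

(* the adjoint A^H (chosen; unique when it exists) *)
Definition adj (U V : lmodType K) (ipU : U -> U -> K) (ipV : V -> V -> K)
  (A : U -> V) : V -> U :=
  epsilon (inhabits (fun _ : V => (0 : U))) (fun AH => is_adjoint ipU ipV A AH).

(* the (two-sided) inverse operator f^{-1} (chosen; unique when it exists) *)
Definition inv_op (U V : lmodType K) (f : U -> V) : V -> U :=
  epsilon (inhabits (fun _ : V => (0 : U))) (fun g => cancel f g /\ cancel g f).

Definition ipN (Y : lmodType K) (N : nat) (ipY : Y -> Y -> K)
  (v w : {ffun 'I_N -> Y}) : K := \sum_(j < N) ipY (v j) (w j).

Variables (X Y : lmodType K) (ipX : X -> X -> K) (ipY : Y -> Y -> K).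
Variable Th : Type.                        (* incident directions *)
Variable F : Th -> X -> Y.
Variable F' : Th -> X -> X -> Y.           (* q, m |-> F'_theta[q] m *)
Variable R : Y -> Y.
Variable N : nat.
Variable th : nat -> Th.                   (* theta_1, ..., theta_N = th 1 .. th N *)
Variable u : nat -> Y.                     (* u^infty_{theta_n} = u n, n = 1..N *)

(* component j : 'I_N of the product space corresponds to theta_{j+1} *)
Definition Fvec (q : X) : {ffun 'I_N -> Y} := [ffun j : 'I_N => F (th j.+1) q].
Definition F'vec (q : X) (m : X) : {ffun 'I_N -> Y} :=
  [ffun j : 'I_N => F' (th j.+1) q m].
Definition uvec : {ffun 'I_N -> Y} := [ffun j : 'I_N => u j.+1].
Definition RinvN (v : {ffun 'I_N -> Y}) : {ffun 'I_N -> Y} :=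
  [ffun j => inv_op R (v j)].

Definition flm_normal_op (a : K) (q : X) : X -> X :=
  fun m => a *: m + adj ipX (ipN ipY) (F'vec q) (RinvN (F'vec q m)).

Definition flm_step (a : K) (q : X) : X :=
  q + inv_op (flm_normal_op a q)
        (adj ipX (ipN ipY) (F'vec q) (RinvN (uvec - Fvec q))).

Fixpoint flm (q0 : X) (alpha : nat -> K) (i : nat) : X :=
  match i with
  | 0 => q0
  | i'.+1 => flm_step (alpha i') (flm q0 alpha i')
  end.

Definition kfl_S (qi0 : X) (n : nat) (B : X -> X) : Y -> Y :=
  fun y => R y + F' (th n) qi0 (B (adj ipX ipY (F' (th n) qi0) y)).

Definition kfl_gain (qi0 : X) (n : nat) (B : X -> X) : Y -> X :=
  fun y => B (adj ipX ipY (F' (th n) qi0) (inv_op (kfl_S qi0 n B) y)).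

(* (q_{i,n}, B_{i,n}) for the outer step with starting point qi0 = q_{i,0} *)
Fixpoint kfl_inner (qi0 : X) (a : K) (n : nat) : X * (X -> X) :=
  match n with
  | 0 => (qi0, fun m => a^-1 *: m)
  | n'.+1 =>
      let: (q, B) := kfl_inner qi0 a n' in
      let Kn := kfl_gain qi0 n'.+1 B in
      let A := F' (th n'.+1) qi0 in
      (q + Kn (u n'.+1 - F (th n'.+1) qi0 + A qi0 - A q),
       fun m => B m - Kn (A (B m)))
  end.

Fixpoint kfl_start (q0 : X) (alpha : nat -> K) (i : nat) : X :=
  match i with
  | 0 => q0
  | i'.+1 => (kfl_inner (kfl_start q0 alpha i') (alpha i') N).1
  end.

Definition kfl (q0 : X) (alpha : nat -> K) (i n : nat) : X :=
  (kfl_inner (kfl_start q0 alpha i) (alpha i) n).1.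

Definition kfl_B (q0 : X) (alpha : nat -> K) (i n : nat) : X -> X :=
  (kfl_inner (kfl_start q0 alpha i) (alpha i) n).2.

End Defs.

(* Main.v *)
Require Import Defs.
From HB Require Import structures.
From Stdlib Require Import ClassicalEpsilon.
From mathcomp Require Import all_boot all_order all_algebra.
Import Order.TTheory GRing.Theory Num.Theory.
Set Implicit Arguments. Unset Strict Implicit. Unset Printing Implicit Defensive.
Local Open Scope ring_scope.

Section Generic.
Variable K : numClosedFieldType.

Lemma linD (U V : lmodType K) (f : U -> V) : lin f -> forall x y, f (x + y) = f x + f y.
Proof. by move=> hf x y; rewrite -[x in LHS]scale1r hf scale1r. Qed.

Lemma lin0 (U V : lmodType K) (f : U -> V) : lin f -> f 0 = 0.
Proof. by move=> hf; have h := linD hf 0 0; rewrite addr0 in h; apply: (addrI (f 0)); rewrite addr0 -h. Qed.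

Lemma linZ (U V : lmodType K) (f : U -> V) : lin f -> forall a x, f (a *: x) = a *: f x.
Proof. by move=> hf a x; rewrite -[a *: x]addr0 hf lin0 // addr0. Qed.

Lemma linN (U V : lmodType K) (f : U -> V) : lin f -> forall x, f (- x) = - f x.
Proof. by move=> hf x; rewrite -scaleN1r linZ // scaleN1r. Qed.

Lemma linB (U V : lmodType K) (f : U -> V) : lin f -> forall x y, f (x - y) = f x - f y.
Proof. by move=> hf x y; rewrite linD // linN. Qed.

Lemma lin_sum (U V : lmodType K) (f : U -> V) (n : nat) (G : 'I_n -> U) :
  lin f -> f (\sum_(j < n) G j) = \sum_(j < n) f (G j).
Proof.
move=> hf; elim: n G => [|n IH] G; first by rewrite !big_ord0 lin0.
by rewrite !big_ord_recr /= linD // IH.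
Qed.

Lemma lin_comp (U V W : lmodType K) (f : V -> W) (g : U -> V) :
  lin f -> lin g -> lin (fun x => f (g x)).
Proof. by move=> hf hg a x y; rewrite hg hf. Qed.

Lemma linBf (U V : lmodType K) (f g : U -> V) :
  lin f -> lin g -> lin (fun x => f x - g x).
Proof. by move=> hf hg b x y; rewrite hf hg scalerBr opprD addrACA. Qed.

Lemma lin_inv (U V : lmodType K) (f : U -> V) (g : V -> U) :
  lin f -> cancel f g -> cancel g f -> lin g.
Proof. by move=> hf fg gf a x y; rewrite -{1}(gf x) -{1}(gf y) -hf fg. Qed.

Lemma inv_opP (U V : lmodType K) (f : U -> V) :
  bijective f -> cancel f (inv_op f) /\ cancel (inv_op f) f.
Proof.
move=> [g fg gf]; rewrite /inv_op.
by apply: (epsilon_spec (inhabits (fun _ : V => (0 : U))) (fun g => cancel f g /\ cancel g f)); exists g.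
Qed.

Lemma adjP (U V : lmodType K) (ipU : U -> U -> K) (ipV : V -> V -> K) (A : U -> V) :
  (exists AH, is_adjoint ipU ipV A AH) -> is_adjoint ipU ipV A (adj ipU ipV A).
Proof. by move=> h; apply: epsilon_spec. Qed.

Section IP.
Variables (V : lmodType K) (ip : V -> V -> K).
Hypothesis hip : inner_product ip.

Lemma ipD u v w : ip (u + v) w = ip u w + ip v w.
Proof. by case: hip => h _ _ _; rewrite -[u]scale1r h mul1r scale1r. Qed.

Lemma ip0 w : ip 0 w = 0.
Proof. by have h := ipD 0 0 w; rewrite addr0 in h; apply: (addrI (ip 0 w)); rewrite addr0 -h. Qed.

Lemma ip_opp u w : ip (- u) w = - ip u w.
Proof. by case: hip => h _ _ _; rewrite -scaleN1r -[_ *: u]addr0 h ip0 addr0 mulN1r. Qed.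

Lemma ip_conj w a u v : ip w (a *: u + v) = a^* * ip w u + ip w v.
Proof.
case: hip => h1 h2 _ _.
by rewrite h2 h1 rmorphD rmorphM /= -!h2.
Qed.

Lemma ip_sum_r w n (G : 'I_n -> V) : ip w (\sum_(j < n) G j) = \sum_(j < n) ip w (G j).
Proof.
elim: n G => [|n IH] G; first by case: hip => _ h2 _ _; rewrite !big_ord0 h2 ip0 rmorph0.
rewrite !big_ord_recr /= -IH.
set S := \sum_(_ < _) _; set g := G _.
rewrite -[S + g]addrC -[g]scale1r ip_conj rmorph1 mul1r. 
by rewrite scale1r addrC.
Qed.

Lemma ip_sep v w : (forall x, ip x v = ip x w) -> v = w.
Proof.
move=> h; apply/eqP; rewrite -subr_eq0; apply/eqP.
case: hip => h1 h2 h3 h4; apply: h4.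
have e : v - w = (-1) *: w + v by rewrite scaleN1r addrC.
by rewrite {2}e ip_conj h rmorphN1 mulN1r addNr.
Qed.
End IP.

Lemma adj_lin (U V : lmodType K) (ipU : U -> U -> K) (ipV : V -> V -> K) (A : U -> V) AH :
  inner_product ipU -> inner_product ipV -> is_adjoint ipU ipV A AH -> lin AH.
Proof.
move=> hU hV hA a y z; apply: (ip_sep hU) => x.
by rewrite -hA (ip_conj hV) (ip_conj hU) !hA.
Qed.
End Generic.


Section Inner.
Variables (K : numClosedFieldType) (X Y : lmodType K)
  (ipX : X -> X -> K) (ipY : Y -> Y -> K)
  (Th : Type) (F : Th -> X -> Y) (F' : Th -> X -> X -> Y)
  (R : Y -> Y) (N : nat) (th : nat -> Th) (u : nat -> Y).
Hypotheses (hX : inner_product ipX) (hY : inner_product ipY) (hR : lin R)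
  (hRb : bijective R) (hF'l : forall t q, lin (F' t q))
  (hF'a : forall t q, exists AH, is_adjoint ipX ipY (F' t q) AH).
Variables (q : X) (a : K).
Hypothesis ha : a != 0.
Hypothesis hS : forall n, (1 <= n <= N)%N ->
  bijective (kfl_S ipX ipY F' R th q n (kfl_inner ipX ipY F F' R th u q a n.-1).2).

Local Notation A n := (F' (th n) q).
Local Notation Ah n := (adj ipX ipY (F' (th n) q)).
Local Notation Ri := (inv_op R).

Lemma hA n : lin (A n). Proof. exact: hF'l. Qed.
Lemma hAh n : lin (Ah n). Proof. exact: adj_lin hX hY (adjP (hF'a _ _)). Qed.
Lemma hRi : lin Ri.
Proof. by case: (inv_opP hRb) => c1 c2; exact: lin_inv hR c1 c2. Qed.
Lemma RRi y : R (Ri y) = y. Proof. by case: (inv_opP hRb). Qed.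
Lemma RiR y : Ri (R y) = y. Proof. by case: (inv_opP hRb). Qed.

Definition Msum n (m : X) := \sum_(j < n) Ah j.+1 (Ri (A j.+1 m)).
Definition gs n := \sum_(j < n) Ah j.+1 (Ri (u j.+1 - F (th j.+1) q)).

Lemma Msum_lin n : lin (Msum n).
Proof.
elim: n => [|n IH] b x y; rewrite /Msum.
  by rewrite !big_ord0 scaler0 addr0.
rewrite !big_ord_recr /=; have := IH b x y; rewrite /Msum => ->.
by rewrite (lin_comp (hAh _) (lin_comp hRi (hA _))) scalerDr addrACA.

Qed.

Lemma MsumS n m : Msum n.+1 m = Msum n m + Ah n.+1 (Ri (A n.+1 m)).
Proof. by rewrite /Msum big_ord_recr. Qed.
Lemma gsS n : gs n.+1 = gs n + Ah n.+1 (Ri (u n.+1 - F (th n.+1) q)).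
Proof. by rewrite /gs big_ord_recr. Qed.

Lemma inner_inv n : (n <= N)%N ->
  let p := kfl_inner ipX ipY F F' R th u q a n in
  [/\ lin p.2, forall x, a *: p.2 x + Msum n (p.2 x) = x & p.1 = q + p.2 (gs n)].
Proof.
elim: n => [|n IH] hn /=.
  split.
  - by move=> b x y; rewrite scalerDr !scalerA mulrC.
  - by move=> x; rewrite /Msum big_ord0 addr0 scalerA mulfV // scale1r.
  - by rewrite /gs big_ord0 scaler0 addr0.
have hS' := @hS n.+1 hn.
move: IH; rewrite (ltnW hn) => /(_ isT).
case E: (kfl_inner ipX ipY F F' R th u q a n) => [qn B] /= [hB hMB hq].
rewrite E /= in hS'.
set S := kfl_S ipX ipY F' R th q n.+1 B in hS' *.
set Kn := kfl_gain ipX ipY F' R th q n.+1 B.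
have [SSi SiS] := inv_opP hS'.
have hSl : lin S.
  move=> b x y; rewrite /S /kfl_S hR (lin_comp (hA _) (lin_comp hB (hAh _))).
  by rewrite scalerDr addrACA.
have hSil := lin_inv hSl SSi SiS.
have key : forall z, A n.+1 (B (Ah n.+1 z)) = S z - R z.
  by move=> z; rewrite /S /kfl_S [R z + _]addrC addrK.
have hKdef : forall y, Kn y = B (Ah n.+1 (inv_op S y)) by [].
have hKl : lin Kn := lin_comp hB (lin_comp (hAh _) hSil).
split.
- exact: linBf hB (lin_comp hKl (lin_comp (hA _) hB)).
- have E1 : forall p r : X, a *: (p - r) + Msum n (p - r) = (a *: p + Msum n p) - (a *: r + Msum n r).
    by move=> p r; rewrite (linB (Msum_lin n)) scalerBr opprD addrACA.
  move=> x; rewrite MsumS addrA E1 hKdef !hMB.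
  by rewrite (linB (hA _)) key SiS subKr RiR subrK.
- rewrite hq gsS.
  set c := u n.+1 - F (th n.+1) q; clearbody c.
  have earg : c + A n.+1 q - A n.+1 (q + B (gs n)) = c - A n.+1 (B (gs n)).
    by rewrite (linD (hA _)) addrKA.
  have eK : B (Ah n.+1 (Ri c)) - Kn (A n.+1 (B (Ah n.+1 (Ri c)))) = Kn c.
    by rewrite key RRi hKdef (linB hSil) SSi (linB (hAh _)) (linB hB) subKr.
  rewrite earg (linD hB) (linD (hA _)) (linB hKl) (linD hKl) opprD [X in _ = q + X]addrACA eK.
  by rewrite -[LHS]addrA; congr (_ + _); rewrite addrCA addrC.
Qed.

Lemma adjvec v : adj ipX (ipN ipY) (F'vec F' N th q) v = \sum_(j < N) Ah j.+1 (v j).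
Proof.
have hAv : is_adjoint ipX (ipN ipY) (F'vec F' N th q) (fun v => \sum_(j < N) Ah j.+1 (v j)).
  move=> x w; rewrite /ipN (ip_sum_r hX); apply: eq_bigr => j _.
  by rewrite ffunE; exact: (adjP (hF'a _ _)).
apply: (ip_sep hX) => x.
by rewrite -(adjP (ex_intro _ _ hAv)) hAv.
Qed.

Hypothesis hM : bijective (flm_normal_op ipX ipY F' R N th a q).

Lemma kfl_step_eq : (kfl_inner ipX ipY F F' R th u q a N).1 = flm_step ipX ipY F F' R N th u a q.
Proof.
have [h1 h2 h3] := inner_inv (leqnn N).
have [MMi MiM] := inv_opP hM.
have eM : forall m, flm_normal_op ipX ipY F' R N th a q m = a *: m + Msum N m.
  move=> m; rewrite /flm_normal_op adjvec /Msum; congr (_ + _).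
  by apply: eq_bigr => j _; rewrite !ffunE.
have eg : adj ipX (ipN ipY) (F'vec F' N th q) (RinvN R (uvec N u - Fvec F N th q)) = gs N.
  by rewrite adjvec /gs; apply: eq_bigr => j _; rewrite !ffunE.
rewrite /flm_step h3 eg; congr (_ + _).
by rewrite -{2}(h2 (gs N)) -eM MMi.
Qed.
End Inner.

Theorem theorem3p1
  (K : numClosedFieldType) (X Y : lmodType K)
  (ipX : X -> X -> K) (ipY : Y -> Y -> K)
  (Th : Type) (F : Th -> X -> Y) (F' : Th -> X -> X -> Y)
  (R : Y -> Y) (N : nat) (th : nat -> Th) (u : nat -> Y)
  (q0 : X) (alpha : nat -> K) :
  (* Hilbert-space structure of L^2(Q) and L^2(S^1) *)
  inner_product ipX -> inner_product ipY ->
  (* R : bounded, self-adjoint, positive definite, invertible linear operator *)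
  lin R ->
  (exists c : K, 0 <= c /\ forall y : Y, ipY (R y) (R y) <= c * ipY y y) ->
  is_adjoint ipY ipY R R ->
  (forall y : Y, y != 0 -> 0 < ipY (R y) y) ->
  bijective R ->
  (* derivatives F'_theta[q] : bounded linear operators, having adjoints *)
  (forall t q, lin (F' t q)) ->
  (forall t q, exists AH, is_adjoint ipX ipY (F' t q) AH) ->
  (* positive regularization parameters *)
  (forall i, 0 < alpha i) ->
  (* well-definedness of both iterations: the inverted operators are invertible *)
  (forall i, bijective (flm_normal_op ipX ipY F' R N th (alpha i)
                          (flm ipX ipY F F' R N th u q0 alpha i))) ->
  (forall i n, (1 <= n <= N)%N ->
     bijective (kfl_S ipX ipY F' R th (kfl_start ipX ipY F F' R N th u q0 alpha i) n
                  (kfl_B ipX ipY F F' R N th u q0 alpha i n.-1))) ->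
  forall i : nat,
    kfl ipX ipY F F' R N th u q0 alpha i N = flm ipX ipY F F' R N th u q0 alpha i.+1.
Proof.
move=> hX hY hR _ _ _ hRb hF'l hF'a hal hM hS.
have ekfl : forall i, kfl_start ipX ipY F F' R N th u q0 alpha i = flm ipX ipY F F' R N th u q0 alpha i.
  elim=> [|i IH] //=.
  have := hS i; rewrite /kfl_B; rewrite IH => hSi.
  apply: (kfl_step_eq hX hY hR hRb hF'l hF'a _ hSi (hM i)).
  exact: lt0r_neq0.
by move=> i; exact: (ekfl i.+1).
Qed.
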